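(* Let $\mathcal C$ be a finite set of vectors in $\mathbb R^N$. Let $\{x_n\}\subset\mathbb R^N_{>0}$ be a partially monotonic sequence such that $\lim_{n\to\infty}x_{n,i}\in\{0,\infty\}$ for at least one $i\in\{1,\dots,N\}$. Let $U=\{i:\lim_{n\to\infty}x_{n,i}=0\}$ and $V=\{j:\lim_{n\to\infty}x_{n,j}=\infty\}$. Suppose $\mathcal C$ is partitioned along $\{x_n\}$ with tiers $T_1,\dots,T_P$ and some constant $C$. Then there exists a conservation relation $w\in\mathbb R^N$ that respects the triple $(U,V,\{T_i\})$.
   Context: For $u\in\mathbb R^N_{\ge0}$, $v\in\mathbb R^N$, $u^v=u_1^{v_1}\cdots u_N^{v_N}$ (with $0^0=1$). A partition of $\mathcal C$ is a collection of nonempty pairwise disjoint subsets with union $\mathcal C$. $\mathcal C$ is partitioned along $\{x_n\}$ if there exist a partition $\{T_i\}_{i=1}^P$ of $\mathcal C$ (tiers) and a constant $C>1$ such that (i) if $y_j,y_k\in T_i$ then $\frac1C x_n^{y_j}\le x_n^{y_k}\le Cx_n^{y_j}$ for all $n$, and (ii) if $y_j\in T_i$, $y_k\in T_{i+m}$ with $m\ge1$, then $x_n^{y_j}/x_n^{y_k}\to\infty$ as $n\to\infty$. A sequence $\{x_n\}\subset\mathbb R^N_{>0}$ is partially monotonic if $x_{n,i}\ge x_{n+1,i}$ for all $n$ for each $i$ with $\liminf_n x_{n,i}=0$, and $x_{n,j}\le x_{n+1,j}$ for all $n$ for each $j$ with $\limsup_n x_{n,j}=\infty$. The positive support of $w\in\mathbb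 R^N$ is $\{i:w_i>0\}$, the negative support is $\{i:w_i<0\}$. For $U,V\subset\{1,\dots,N\}$ with $U\cup V$ nonempty, $w\in\mathbb R^N$ is a conservation relation that respects the triple $(U,V,\{T_i\})$ if $U$ is exactly the positive support of $w$, $V$ is exactly the negative support of $w$, and $w\cdot(y_j-y_\ell)=0$ whenever $y_j,y_\ell$ lie in the same tier $T_i$. *)

(* Defs.v *)
From Stdlib Require Import Reals.
From mathcomp Require Import ssreflect ssrbool ssrnat eqtype seq fintype.
Open Scope R_scope.

Definition vec (N : nat) := 'I_N -> R.

(* real power with the convention 0^0 = 1 (and 0^b = 0 for b <> 0);
   for a > 0 it is Rpower a b = exp (b ln a). *)
Definition rpow (a b : R) : R :=
  if Req_EM_T a 0 then (if Req_EM_T b 0 then 1 else 0) else Rpower a b.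

Definition monom {N : nat} (u v : vec N) : R :=
  foldr Rmult 1 (map (fun i => rpow (u i) (v i)) (enum 'I_N)).

Definition dot {N : nat} (w y : vec N) : R :=
  foldr Rplus 0 (map (fun i => w i * y i) (enum 'I_N)).

Definition vsub {N : nat} (y z : vec N) : vec N := fun i => y i - z i.

Definition finite_set {N : nat} (C : vec N -> Prop) : Prop :=
  exists l : list (vec N), forall y, C y <-> List.In y l.

Definition liminf_is_zero (u : nat -> R) : Prop :=
  (forall eps, 0 < eps -> forall M : nat, exists n : nat, (M <= n)%nat /\ u n < eps) /\
  (forall eps, 0 < eps -> exists M : nat, forall n : nat, (M <= n)%nat -> - eps < u n).

Definition limsup_is_infty (u : nat -> R) : Prop :=
  forall B : R, forall M : nat, exists n : nat, (M <= n)%nat /\ B < u n.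

Definition partially_monotonic {N : nat} (x : nat -> vec N) : Prop :=
  (forall i : 'I_N, liminf_is_zero (fun n => x n i) ->
     forall n, x (S n) i <= x n i) /\
  (forall j : 'I_N, limsup_is_infty (fun n => x n j) ->
     forall n, x n j <= x (S n) j).

(* {T_0, ..., T_(P-1)} is a partition of C (tiers indexed 0..P-1 instead of 1..P) *)
Definition is_partition {N : nat} (C : vec N -> Prop) (P : nat)
    (T : nat -> vec N -> Prop) : Prop :=
  (forall k, (k < P)%nat -> exists y, T k y) /\
  (forall k l y, (k < P)%nat -> (l < P)%nat -> T k y -> T l y -> k = l) /\
  (forall y, C y <-> exists k, (k < P)%nat /\ T k y).

Definition partitioned_along {N : nat} (C : vec N -> Prop) (x : nat -> vec N)
    (P : nat) (T : nat -> vec N -> Prop) (Cst : R) : Prop :=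
  is_partition C P T /\ 1 < Cst /\
  (forall k y z, (k < P)%nat -> T k y -> T k z -> forall n,
      / Cst * monom (x n) y <= monom (x n) z /\ monom (x n) z <= Cst * monom (x n) y) /\
  (forall k m y z, (k < P)%nat -> (1 <= m)%nat -> (k + m < P)%nat ->
      T k y -> T (k + m)%nat z ->
      cv_infty (fun n => monom (x n) y / monom (x n) z)).

Definition conservation_relation {N : nat} (U V : 'I_N -> Prop) (P : nat)
    (T : nat -> vec N -> Prop) (w : vec N) : Prop :=
  (exists i, U i \/ V i) /\
  (forall i, 0 < w i <-> U i) /\
  (forall i, w i < 0 <-> V i) /\
  (forall k y z, (k < P)%nat -> T k y -> T k z -> dot w (vsub y z) = 0).

(* Main.v *)
Require Import Defs.
From Stdlib Require Import Reals.
From mathcomp Require Import ssreflect ssrbool ssrnat eqtype seq fintype.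
From Stdlib Require Import Lra Classical ClassicalEpsilon.
From mathcomp Require Import zify.
Open Scope R_scope.

Definition sumL {I : Type} (l : list I) (f : I -> R) : R := foldr Rplus 0 (map f l).

Lemma dot_sumL N (w y : vec N) : dot w y = sumL (enum 'I_N) (fun i => w i * y i).
Proof. reflexivity. Qed.

Lemma sumL_ext {I} (l : list I) f g : (forall i, f i = g i) -> sumL l f = sumL l g.
Proof. move=> H; elim: l => [|a l IH] //=. rewrite /sumL /= in IH *. by rewrite IH H. Qed.

Lemma sumL_lin {I} (l : list I) f g c :
  sumL l f - c * sumL l g = sumL l (fun i => f i - c * g i).
Proof. elim: l => [|a l IH]; first by rewrite /sumL /=; ring.
rewrite /sumL /= in IH *; rewrite -IH; ring. Qed.

Lemma sumL_plus {I} (l : list I) f g :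
  sumL l f + sumL l g = sumL l (fun i => f i + g i).
Proof. elim: l => [|a l IH]; first by rewrite /sumL /=; ring.
rewrite /sumL /= in IH *; rewrite -IH; ring. Qed.

Definition bnd (f : nat -> R) := exists B, forall n, Rabs (f n) <= B.

Lemma abs_bnd a B : Rabs a <= B -> -B <= a <= B.
Proof. unfold Rabs; destruct Rcase_abs; lra. Qed.

Lemma sumL_bnd {I} (l : list I) (f : nat -> I -> R) :
  (forall i, bnd (fun n => f n i)) -> bnd (fun n => sumL l (f n)).
Proof.
move=> H; elim: l => [|a l [B IH]].
- exists 0 => n; rewrite /sumL /= Rabs_R0; lra.
- case: (H a) => Ba Ha. exists (Ba + B) => n. rewrite /sumL /=.
  apply: Rle_trans; first apply: Rabs_triang.
  have := Ha n; have := IH n; rewrite /sumL; lra.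
Qed.

Lemma bnd_plus f g : bnd f -> bnd g -> bnd (fun n => f n + g n).
Proof.
move=> [B1 H1] [B2 H2]; exists (B1 + B2) => n.
apply: Rle_trans; first apply: Rabs_triang. have := H1 n; have := H2 n; lra.
Qed.

Lemma prod_exp {I} (l : list I) f :
  foldr Rmult 1 (map (fun i => exp (f i)) l) = exp (sumL l f).
Proof.
elim: l => [|a l IH]; first by rewrite /sumL /= exp_0.
rewrite /sumL /= in IH *.
by rewrite IH exp_plus.
Qed.

Lemma in_enumP N (i : 'I_N) : List.In i (enum 'I_N).
Proof.
have : i \in enum 'I_N by rewrite mem_enum.
elim: (enum 'I_N) => [|a s IH] //=.
rewrite in_cons => /orP [/eqP -> | H]; [by left | right; exact: IH].
Qed.

Lemma ev_list {I} (l : list I) (Pr : I -> nat -> Prop) :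
  (forall i, exists M, forall n, (M <= n)%coq_nat -> Pr i n) ->
  exists M, forall n, (M <= n)%coq_nat -> forall i, List.In i l -> Pr i n.
Proof.
move=> H; elim: l => [|a l [Ml IH]].
- by exists 0%nat.
- case: (H a) => Ma Ha. exists (Ma + Ml)%coq_nat => n Hn i [<-|Hi].
  + apply: Ha; lia.
  + apply: IH => //; lia.
Qed.

Lemma dot_lin N (v e d : vec N) c :
  dot (fun i => v i - c * e i) d = dot v d - c * dot e d.
Proof.
rewrite !dot_sumL sumL_lin. apply: sumL_ext => i; ring.
Qed.

Lemma dot_diff_bnd N (v u : nat -> vec N) d :
  (forall i, bnd (fun n => v n i - u n i)) ->
  bnd (fun n => dot (v n) d - dot (u n) d).
Proof.
move=> Hb.
have E : forall n, dot (v n) d - dot (u n) d =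
   sumL (enum 'I_N) (fun i => (v n i - u n i) * d i).
{ move=> n; rewrite !dot_sumL. rewrite -(Rmult_1_l (sumL _ (fun i => u n i * d i))).
  rewrite sumL_lin; apply: sumL_ext => i; ring. }
have [B HB] : bnd (fun n => sumL (enum 'I_N) (fun i => (v n i - u n i) * d i)).
{ apply: (sumL_bnd _ (fun n i => (v n i - u n i) * d i)) => i.
  have [Bi Hi] := Hb i. exists (Bi * Rabs (d i)) => n /=.
  rewrite Rabs_mult. apply: Rmult_le_compat_r; [exact: Rabs_pos | exact: Hi]. }
exists B => n; rewrite E; exact: HB.
Qed.

Lemma proj_lemma N (A : Type) (g : A -> vec N) (Q : A -> Prop) (u : nat -> vec N)
  (ds : list A) :
  (forall a, Q a -> bnd (fun n => dot (u n) (g a))) ->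
  exists v : nat -> vec N, (forall i, bnd (fun n => v n i - u n i)) /\
    (forall n a, List.In a ds -> Q a -> dot (v n) (g a) = 0).
Proof.
move=> Hu; elim: ds => [|a ds [v [Hb Hz]]].
- exists u; split => //. move=> i; exists 0 => n.
  replace (u n i - u n i) with 0 by ring; rewrite Rabs_R0; lra.
- case: (classic (Q a)) => [Qa|nQa]; last first.
  { exists v; split => // n a' [<-|Hin] Qa' //; exact: Hz. }
  case: (classic (exists e : vec N,
      (forall a', List.In a' ds -> Q a' -> dot e (g a') = 0) /\ dot e (g a) <> 0))
    => [[e [He1 He2]] | Hne].
  + pose c := fun n => dot (v n) (g a) / dot e (g a).
    have Hc : bnd c.
    { have [B1 H1] := dot_diff_bnd _ v u (g a) Hb.
      have [B2 H2] := Hu a Qa.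
      exists ((B1 + B2) * Rabs (/ dot e (g a))) => n.
      rewrite /c /Rdiv Rabs_mult. apply: Rmult_le_compat_r; first exact: Rabs_pos.
      replace (dot (v n) (g a)) with ((dot (v n) (g a) - dot (u n) (g a)) + dot (u n) (g a)) by ring.
      apply: Rle_trans; first apply: Rabs_triang. have := H1 n; have := H2 n; lra. }
    exists (fun n i => v n i - c n * e i); split.
    * move=> i. have [B1 H1] := Hb i. have [B2 H2] := Hc.
      exists (B1 + B2 * Rabs (e i)) => n.
      replace (v n i - c n * e i - u n i) with ((v n i - u n i) + - (c n * e i)) by ring.
      apply: Rle_trans; first apply: Rabs_triang. rewrite Rabs_Ropp Rabs_mult.
      have := H1 n; have := Rmult_le_compat_r _ _ _ (Rabs_pos (e i)) (H2 n); lra.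
    * move=> n a' [<-|Hin] Qa'; rewrite dot_lin.
      - rewrite /c; field; exact: He2.
      - rewrite Hz // He1 //; ring.
  + exists v; split => // n a' Ha' Qa'; case: Ha' => [Ea|Hin]; last exact: Hz.
    subst a'.
    case: (Req_dec (dot (v n) (g a)) 0) => // Hne'.
    exfalso; apply: Hne; exists (v n); split; [move=> *; exact: Hz | done].
Qed.

Lemma ln_le' a b : 0 < a -> a <= b -> ln a <= ln b.
Proof. move=> Ha [H|->]; [left; exact: ln_increasing | right; reflexivity]. Qed.

Lemma dec_mono (f : nat -> R) : (forall n, f (S n) <= f n) ->
  forall m k, f (m + k)%coq_nat <= f m.
Proof.
move=> H m k; elim: k => [|k IH]; first by rewrite Nat.add_0_r; lra.
rewrite Nat.add_succ_r; have := H (m + k)%coq_nat; lra.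
Qed.

Lemma inc_mono (f : nat -> R) : (forall n, f n <= f (S n)) ->
  forall m k, f m <= f (m + k)%coq_nat.
Proof.
move=> H m k; elim: k => [|k IH]; first by rewrite Nat.add_0_r; lra.
rewrite Nat.add_succ_r; have := H (m + k)%coq_nat; lra.
Qed.

Lemma prefix_lower (f : nat -> R) : (forall n, 0 < f n) ->
  forall M a, 0 < a -> (forall n, (M <= n)%nat -> a <= f n) ->
  exists b, 0 < b /\ forall n, b <= f n.
Proof.
move=> Hp; elim=> [|M IH] a Ha H.
- exists a; split => // n; exact: H.
- apply: (IH (Rmin a (f M))).
  + apply: Rmin_pos => //.
  + move=> n Hn. have [->|Hn'] : n = M \/ (M.+1 <= n)%nat by lia.
    * exact: Rmin_r.
    * apply: Rle_trans; [exact: Rmin_l | exact: H].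
Qed.

Lemma prefix_upper (f : nat -> R) :
  forall M a, (forall n, (M <= n)%nat -> f n <= a) ->
  exists b, forall n, f n <= b.
Proof.
elim=> [|M IH] a H.
- exists a => n; exact: H.
- apply: (IH (Rmax a (f M))).
  move=> n Hn. have [->|Hn'] : n = M \/ (M.+1 <= n)%nat by lia.
  + exact: Rmax_r.
  + apply: Rle_trans; [exact: H | exact: Rmax_l].
Qed.

Lemma lower_of (f : nat -> R) : (forall n, 0 < f n) ->
  (forall n, f (S n) <= f n) \/ ~ liminf_is_zero f ->
  ~ Un_cv f 0 -> exists b, 0 < b /\ forall n, b <= f n.
Proof.
move=> Hp Hmon HU.
have Hnl : ~ liminf_is_zero f.
{ case: Hmon => // Hd Hl; apply: HU => eps Heps.
  have [n0 [_ Hn0]] := (proj1 Hl) eps Heps 0%nat.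
  exists n0 => n Hn. rewrite /Rdist Rminus_0_r Rabs_pos_eq; last by have := Hp n; lra.
  have [k Hk] : exists k, n = (n0 + k)%coq_nat by exists (n - n0)%coq_nat; lia.
  subst n. have := dec_mono f Hd n0 k. lra. }
apply: NNPP => Hno; apply: Hnl; split.
- move=> eps Heps M; apply: NNPP => H1; apply: Hno.
  apply: (prefix_lower f Hp M eps Heps) => n Hn.
  apply: Rnot_lt_le => Hlt; apply: H1; exists n; split => //.
- move=> eps Heps; exists 0%nat => n _; have := Hp n; lra.
Qed.

Lemma upper_of (f : nat -> R) :
  (forall n, f n <= f (S n)) \/ ~ limsup_is_infty f ->
  ~ cv_infty f -> exists b, forall n, f n <= b.
Proof.
move=> Hmon HV.
have Hnl : ~ limsup_is_infty f.
{ case: Hmon => // Hd Hl; apply: HV => M.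
  have [n0 [_ Hn0]] := Hl M 0%nat.
  exists n0 => n Hn.
  have [k Hk] : exists k, n = (n0 + k)%coq_nat by exists (n - n0)%coq_nat; lia.
  subst n. have := inc_mono f Hd n0 k. lra. }
apply: NNPP => Hno; apply: Hnl => B M; apply: NNPP => H1; apply: Hno.
apply: (prefix_upper f M B) => n Hn.
apply: Rnot_lt_le => Hlt; apply: H1; exists n; split => //.
Qed.

Theorem mainTheorem3 (N : nat) (C : vec N -> Prop) (x : nat -> vec N)
    (P : nat) (T : nat -> vec N -> Prop) (Cst : R) :
  finite_set C ->
  (forall n (i : 'I_N), 0 < x n i) ->
  partially_monotonic x ->
  (exists i : 'I_N, Un_cv (fun n => x n i) 0 \/ cv_infty (fun n => x n i)) ->
  partitioned_along C x P T Cst ->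
  exists w : vec N,
    conservation_relation
      (fun i => Un_cv (fun n => x n i) 0)
      (fun j => cv_infty (fun n => x n j))
      P T w.
Proof.
move=> [l Hl] Hpos [Hpm1 Hpm2] Hex [[Hp1 [Hp2 Hp3]] [HC [Htier _]]].
have HUV : forall i : 'I_N,
    ~ (Un_cv (fun n => x n i) 0 /\ cv_infty (fun n => x n i)).
{ move=> i [H1 H2]. have [N1 HN1] := H1 1 ltac:(lra). have [N2 HN2] := H2 1.
  have := HN1 (N1 + N2)%coq_nat ltac:(lia). have := HN2 (N1 + N2)%coq_nat ltac:(lia).
  rewrite /Rdist Rminus_0_r. have := Rle_abs (x (N1 + N2)%coq_nat i). lra. }
have Hlnb : forall i, ~ Un_cv (fun n => x n i) 0 -> ~ cv_infty (fun n => x n i) ->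
    bnd (fun n => ln (x n i)).
{ move=> i HU HV.
  have Hm1 : (forall n, x (S n) i <= x n i) \/ ~ liminf_is_zero (fun n => x n i).
  { case: (classic (liminf_is_zero (fun n => x n i))) => H; [left; exact: Hpm1 | by right]. }
  have Hm2 : (forall n, x n i <= x (S n) i) \/ ~ limsup_is_infty (fun n => x n i).
  { case: (classic (limsup_is_infty (fun n => x n i))) => H; [left; exact: Hpm2 | by right]. }
  have [b [Hb Hlo]] := lower_of (fun n => x n i) (fun n => Hpos n i) Hm1 HU.
  have [B HB] := upper_of (fun n => x n i) Hm2 HV.
  exists (Rabs (ln b) + Rabs (ln B)) => n. apply: Rabs_le.
  have := ln_le' b (x n i) Hb (Hlo n). have := ln_le' (x n i) B (Hpos n i) (HB n).
  have := Rle_abs (ln B). have h1 := Rle_abs (- ln b). rewrite Rabs_Ropp in h1.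
  have := Rabs_pos (ln b). have := Rabs_pos (ln B). lra. }
pose K := fun i => Un_cv (fun n => x n i) 0 \/ cv_infty (fun n => x n i).
pose mask := fun (d : vec N) i => if excluded_middle_informative (K i) then d i else 0.
pose u := fun n (i : 'I_N) => - ln (x n i).
pose Q := fun p : vec N * vec N => exists k, (k < P)%nat /\ T k (fst p) /\ T k (snd p).
have Hub : forall p, Q p -> bnd (fun n => dot (u n) (mask (vsub (fst p) (snd p)))).
{ move=> [y z] [k [Hk [Ty Tz]]] /=.
  pose S := fun n (y : vec N) => sumL (enum 'I_N) (fun i => y i * ln (x n i)).
  have Hmon : forall n y, monom (x n) y = exp (S n y).
  { move=> n y'. rewrite /monom -prod_exp /S. f_equal. apply: eq_map => i.
    rewrite /rpow. destruct (Req_EM_T (x n i) 0) as [H|H]; first by have := Hpos n i; lra. done. }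
  have E : forall n, dot (u n) (mask (vsub y z)) = (S n z - S n y) +
     sumL (enum 'I_N) (fun i => if excluded_middle_informative (K i) then 0
                                else ln (x n i) * (y i - z i)).
  { move=> n. rewrite /S -(Rmult_1_l (sumL _ (fun i => y i * _))) sumL_lin sumL_plus dot_sumL.
    apply: sumL_ext => i. rewrite /mask /u /vsub. destruct (excluded_middle_informative (K i)) as [hK|hK]. all: simpl; ring. }
  have [B1 H1] : bnd (fun n => S n z - S n y).
  { exists (ln Cst) => n. have [h1 h2] := Htier k y z Hk Ty Tz n. rewrite !Hmon in h1 h2.
    have HC0 : 0 < Cst by lra.
    have HiC : 0 < / Cst by apply: Rinv_0_lt_compat.
    have := ln_le' _ _ (Rmult_lt_0_compat _ _ HiC (exp_pos (S n y))) h1.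
    have := ln_le' _ _ (exp_pos _) h2.
    rewrite !ln_mult //; try exact: exp_pos.
    rewrite ln_Rinv // !ln_exp.
    move=> a b; apply: Rabs_le; lra. }
  have [B2 H2] : bnd (fun n => sumL (enum 'I_N) (fun i => if excluded_middle_informative (K i) then 0
                                else ln (x n i) * (y i - z i))).
  { apply: (sumL_bnd _ (fun n i => if excluded_middle_informative (K i) then 0
                                else ln (x n i) * (y i - z i))) => i /=.
    destruct (excluded_middle_informative (K i)) as [HK|HK].
    - exists 0 => n; rewrite Rabs_R0; lra.
    - have [Bi HBi] := Hlnb i (fun h => HK (or_introl h)) (fun h => HK (or_intror h)).
      exists (Bi * Rabs (y i - z i)) => n. rewrite Rabs_mult.
      apply: Rmult_le_compat_r; [exact: Rabs_pos | exact: HBi]. }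
  exists (B1 + B2) => n; rewrite E. apply: Rle_trans; first apply: Rabs_triang.
  have := H1 n; have := H2 n; lra. }
have [v [Hvb Hvz]] := proj_lemma N _ (fun p => mask (vsub (fst p) (snd p))) Q u (List.list_prod l l) Hub.
have Hev : forall i : 'I_N, exists M, forall n, (M <= n)%coq_nat ->
    (Un_cv (fun n => x n i) 0 -> 0 < v n i) /\ (cv_infty (fun n => x n i) -> v n i < 0).
{ move=> i. have [Bi HBi] := Hvb i.
  case: (classic (Un_cv (fun n => x n i) 0)) => HU.
  - have [M HM] := HU (exp (-(Bi+1))) (exp_pos _).
    exists M => n Hn; split => [_|HV]; last by exfalso; exact: HUV i (conj HU HV).
    have := HM n Hn. rewrite /Rdist Rminus_0_r => h. have hx := Rle_abs (x n i).
    have hl : ln (x n i) < -(Bi+1).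
    { rewrite -(ln_exp (-(Bi+1))). apply: ln_increasing; [exact: Hpos | lra]. }
    have := abs_bnd _ _ (HBi n). rewrite /u. lra.
  - case: (classic (cv_infty (fun n => x n i))) => HV.
    + have [M HM] := HV (exp (Bi+1)). exists M => n Hn; split => // _.
      have hl : Bi + 1 < ln (x n i).
      { rewrite -(ln_exp (Bi+1)). apply: ln_increasing; [exact: exp_pos | exact: HM]. }
      have := abs_bnd _ _ (HBi n). rewrite /u. lra.
    + exists 0%nat => n _; split => //. }
have [M HM] := ev_list (enum 'I_N) _ Hev.
exists (fun i => if excluded_middle_informative (K i) then v M i else 0).
split; [exact: Hex | split; [|split]].
- move=> i; have [h1 h2] := HM M (le_n M) i (in_enumP _ i).
  destruct (excluded_middle_informative (K i)) as [HK|HK].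
  + split => [Hw|HU]; last exact: h1. simpl in Hw. case: HK => // HV. have := h2 HV; lra.
  + split => [Hw|HU]; [simpl in Hw; lra | exfalso; apply: HK; left; exact: HU].
- move=> i; have [h1 h2] := HM M (le_n M) i (in_enumP _ i).
  destruct (excluded_middle_informative (K i)) as [HK|HK].
  + split => [Hw|HV]; last exact: h2. simpl in Hw. case: HK => // HU. have := h1 HU; lra.
  + split => [Hw|HV]; [simpl in Hw; lra | exfalso; apply: HK; right; exact: HV].
- move=> k y z Hk Ty Tz.
  have Hin : List.In (y, z) (List.list_prod l l).
  { apply: List.in_prod; apply/Hl; apply/(proj2 (Hp3 _)); exists k; split => //. }
  have := Hvz M (y, z) Hin (ex_intro _ k (conj Hk (conj Ty Tz))).
  rewrite /= !dot_sumL => H; apply: eq_trans H.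
  apply: sumL_ext => i; rewrite /mask; destruct (excluded_middle_informative (K i)) as [hK|hK]; simpl; rewrite /vsub; ring.
Qed.
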